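(* Let $n\ge 2$, $m\ge1$, $\delta>0$, and $0<k<n$ an integer. Then \[ R_k(\delta) \leq (1 - \rho_k^2)^{-m(m+1)/4} \exp\left(|\rho_k|\, m\,\delta^2\right). \]
   Context: An $m\times m$ GOE matrix is a random symmetric matrix whose entries on and above the diagonal are independent centered normal variables, with variance $2$ on the diagonal and variance $1$ off the diagonal. Two GOE matrices $X,Y$ have correlation $\rho\in(-1,1)$ if the pairs $(X_{ij},Y_{ij})$, $i\le j$, are independent across index pairs, each jointly normal with $\mathrm{corr}(X_{ij},Y_{ij})=\rho$. Let $\rho_k = 1-2k/n$ and \[R_k(\delta) = \frac{\mathbb{P}(\|X_k\| \leq \delta,\ \|Y_k\| \leq \delta)}{\mathbb{P}(\|X\| \leq \delta)^2},\] where $X$ is an $m\times m$ GOE matrix and $X_k,Y_k$ are $m\times m$ GOE matrices with correlation $\rho_k$; $\|\cdot\|$ is the spectral norm. *)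

(* Defs.v *)
From HB Require Import structures.
From mathcomp Require Import all_boot all_order all_algebra.
From mathcomp Require Import all_classical all_reals all_analysis.
Set Implicit Arguments. Unset Strict Implicit. Unset Printing Implicit Defensive.
Import Order.TTheory GRing.Theory Num.Theory.
Local Open Scope classical_set_scope.
Local Open Scope ring_scope.

Section GOE.
Variable R : realType.

Definition spec_norm (m : nat) (A : 'M[R]_m) : R :=
  sup [set r | exists x : 'cV[R]_m,
         \sum_i (x i 0) ^+ 2 = 1 /\ r = Num.sqrt (\sum_i ((A *m x) i 0) ^+ 2)].

(* Index pairs (i,j) with i <= j : the independent entries of a symmetric matrix. *)
Definition upper_pairs (m : nat) : seq ('I_m * 'I_m) :=
  [seq p <- [seq (i, j) | i <- enum 'I_m, j <- enum 'I_m] | (val p.1 <= val p.2)%N].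

Definition symmx (m : nat) (v : 'I_m * 'I_m -> R) : 'M[R]_m :=
  \matrix_(i, j) (if (i <= j)%N then v (i, j) else v (j, i)).

Definition goe_var (m : nat) (p : 'I_m * 'I_m) : R :=
  if p.1 == p.2 then 2 else 1.

Definition gauss_dens (s2 x : R) : R :=
  expR (- (x ^+ 2) / (2 * s2)) / Num.sqrt (2 * pi * s2).

(* Density of a centered bivariate normal vector whose coordinates both have
   variance s2 and correlation rho (|rho| < 1). *)
Definition bigauss_dens (s2 rho x y : R) : R :=
  expR (- (x ^+ 2 - 2 * rho * x * y + y ^+ 2) / (2 * s2 * (1 - rho ^+ 2)))
  / (2 * pi * s2 * Num.sqrt (1 - rho ^+ 2)).

Definition upd (K : eqType) (f : K -> R) (k : K) (x : R) : K -> R :=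
  fun k' => if k' == k then x else f k'.

(* Iterated Lebesgue integral over the coordinates listed in s
   (the Lebesgue integral on R^s, for nonnegative integrands, by Tonelli). *)
Fixpoint iter_int (K : eqType) (s : seq K) (F : (K -> R) -> \bar R) : \bar R :=
  match s with
  | [::] => F (fun _ => 0)
  | k :: s' =>
      (\int[@lebesgue_measure R]_(x in setT)
          iter_int s' (fun v => F (upd v k x)))%E
  end.

(* P(||X|| <= delta) for X an m x m GOE matrix. *)
Definition goe_prob (m : nat) (delta : R) : \bar R :=
  iter_int (upper_pairs m)
    (fun v => ((if spec_norm (symmx v) <= delta then 1 else 0)
               * \prod_(p <- upper_pairs m) gauss_dens (goe_var p) (v p))%:E).

(* P(||X|| <= delta, ||Y|| <= delta) for X, Y m x m GOE matrices with
   correlation rho: coordinate (p,false) is X_p, (p,true) is Y_p. *)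
Definition goe_pair_prob (m : nat) (rho delta : R) : \bar R :=
  iter_int [seq (p, b) | p <- upper_pairs m, b <- [:: false; true]]
    (fun w =>
       ((if (spec_norm (symmx (fun p => w (p, false))) <= delta)
            && (spec_norm (symmx (fun p => w (p, true))) <= delta)
         then 1 else 0)
        * \prod_(p <- upper_pairs m)
            bigauss_dens (goe_var p) rho (w (p, false)) (w (p, true)))%:E).

Definition rho_k (n k : nat) : R := 1 - 2 * k%:R / n%:R.

Definition Rk (n m k : nat) (delta : R) : R :=
  fine (goe_pair_prob m (rho_k n k) delta) / (fine (goe_prob m delta)) ^+ 2.

End GOE.

(* Main.v *)
Require Import Defs.
From HB Require Import structures.
From mathcomp Require Import all_boot all_order all_algebra.
From mathcomp Require Import all_classical all_reals all_analysis.
From mathcomp Require Import normal_distribution.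
From mathcomp.algebra_tactics Require Import ring lra.
Import Order.TTheory GRing.Theory Num.Theory.
Local Open Scope ring_scope.
Set Implicit Arguments. Unset Strict Implicit. Unset Printing Implicit Defensive.
Section IntLemmas.
Variable R : realType.
Local Notation mu := (@lebesgue_measure R).
Local Open Scope ereal_scope.
Import HBNNSimple.

Lemma le_int (f g : R -> \bar R) : (forall x, 0 <= f x) -> (forall x, f x <= g x) ->
  \int[mu]_(x in setT) f x <= \int[mu]_(x in setT) g x.
Proof.
move=> f0 fg; have g0 x : 0 <= g x := le_trans (f0 x) (fg x).
rewrite !ge0_integralTE //.
apply: ereal_sup_le => _ [h hf <-]; exists h => //= x; exact: le_trans (hf x) (fg x).
Qed.

Lemma intZ_le (B : R) (a : R -> \bar R) : (0 <= B)%R -> (forall x, 0 <= a x) ->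
  \int[mu]_(x in setT) (B%:E * a x) <= B%:E * \int[mu]_(x in setT) a x.
Proof.
move=> B0 a0; have Ba0 x : 0 <= B%:E * a x by rewrite mule_ge0.
rewrite !ge0_integralTE //.
apply: ge_ereal_sup => _ [h /= hB <-].
have [B00|Bn0] := eqVneq B 0%R.
  rewrite B00 mul0e.
  have h0 x : (h x <= nnsfun0 x)%R.
    by have := hB x; rewrite B00 mul0e lee_fin.
  by rewrite (le_trans (le_sintegral _ h0)) // sintegral0.
have Bp : (0 < B)%R by rewrite lt_neqAle eq_sym Bn0 B0.
have Bi0 : (0 <= B^-1)%R by rewrite invr_ge0.
pose h' := scale_nnsfun h Bi0.
have Eh' : sintegral mu h' = B^-1%:E * sintegral mu h.
  by rewrite -sintegralrM.
set S := ereal_sup _.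
have : sintegral mu h' <= S.
  apply: ereal_sup_ubound; exists h' => //= x.
  rewrite /= EFinM.
  rewrite (le_trans (lee_wpmul2l _ (hB x))) ?lee_fin //.
  by rewrite muleA -EFinM mulVf ?mul1e.
rewrite Eh' => H.
have -> : sintegral mu h = B%:E * (B^-1%:E * sintegral mu h).
  by rewrite muleA -EFinM divff ?mul1e.
by rewrite lee_wpmul2l ?lee_fin.
Qed.

End IntLemmas.
Section IterLemmas.
Variable R : realType.
Local Notation mu := (@lebesgue_measure R).
Local Open Scope ereal_scope.

Definition psi (x : R) : R := normal_pdf 0 2 x.

Lemma psi_ge0 x : (0 <= psi x)%R.
Proof. exact: normal_pdf_ge0. Qed.

Lemma int_psi : \int[mu]_(x in setT) (psi x)%:E = 1.
Proof. exact: integral_normal_pdf. Qed.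

Lemma iter_ge0 (K : eqType) (s : seq K) (F : (K -> R) -> \bar R) :
  (forall v, 0 <= F v) -> 0 <= iter_int s F.
Proof.
elim: s F => [|k s IH] F F0 /=; first exact: F0.
by apply: integral_ge0 => x _; apply: IH => v; apply: F0.
Qed.

Lemma iter_le (K : eqType) (s : seq K) (F G : (K -> R) -> \bar R) :
  (forall v, 0 <= F v) -> (forall v, F v <= G v) -> iter_int s F <= iter_int s G.
Proof.
elim: s F G => [|k s IH] F G F0 FG /=; first exact: FG.
apply: le_int => x; first by apply: iter_ge0 => v; apply: F0.
by apply: IH => v; [apply: F0 | apply: FG].
Qed.

Lemma iter_Z (K : eqType) (s : seq K) (B : R) (F : (K -> R) -> \bar R) :
  (0 <= B)%R -> (forall v, 0 <= F v) ->
  iter_int s (fun v => B%:E * F v) <= B%:E * iter_int s F.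
Proof.
move=> B0; elim: s F => [|k s IH] F F0 /=; first by [].
apply: (le_trans (le_int _ _)); last apply: intZ_le => //.
- by move=> x; apply: iter_ge0 => v; rewrite mule_ge0.
- by move=> x /=; apply: IH.
- by move=> x; apply: iter_ge0.
Qed.

Lemma dom_upd (K : eqType) (k : K) (s : seq K) (g : (K -> R) -> \bar R) (c x : R) :
  k \notin s ->
  (forall v, g v <= (c * \prod_(j <- k :: s) psi (v j))%:E) ->
  forall v, g (upd v k x) <= (c * psi x * \prod_(j <- s) psi (v j))%:E.
Proof.
move=> ks H v; apply: (le_trans (H _)); rewrite big_cons /upd eqxx mulrA lee_fin.
rewrite le_eqVlt; apply/orP; left; apply/eqP. congr (_ * _)%R.
apply: eq_big_seq => j js; case: eqP => // jk.
by move: ks; rewrite -jk js.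
Qed.

Lemma iter_dom (K : eqType) (s : seq K) (g : (K -> R) -> \bar R) (c : R) :
  uniq s -> (0 <= c)%R -> (forall v, 0 <= g v) ->
  (forall v, g v <= (c * \prod_(j <- s) psi (v j))%:E) -> iter_int s g <= c%:E.
Proof.
elim: s g c => [|k s IH] g c /=.
  by move=> _ c0 g0 H; have := H (fun _ => 0%R); rewrite big_nil mulr1.
move=> /andP[ks us] c0 g0 H.
apply: (@le_trans _ _ (\int[mu]_(x in setT) (c%:E * (psi x)%:E))).
  apply: le_int => x; first by apply: iter_ge0 => v; apply: g0.
  rewrite -EFinM; apply: IH => //; first by rewrite mulr_ge0 ?psi_ge0.
  exact: dom_upd.
apply: (le_trans (intZ_le _ _)) => //; first by move=> x; rewrite lee_fin psi_ge0.
by rewrite int_psi mule1.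
Qed.

Lemma int2_le (f : R -> R -> \bar R) (a b : R -> \bar R) :
  (forall x y, 0 <= f x y) -> (forall x, 0 <= a x) -> (forall y, 0 <= b y) ->
  (forall x, a x \is a fin_num) -> \int[mu]_(y in setT) b y \is a fin_num ->
  (forall x y, f x y <= a x * b y) ->
  \int[mu]_(x in setT) \int[mu]_(y in setT) f x y <=
  \int[mu]_(x in setT) a x * \int[mu]_(y in setT) b y.
Proof.
move=> f0 a0 b0 af bf fab.
have Ib0 : 0 <= \int[mu]_(y in setT) b y by apply: integral_ge0.
apply: (@le_trans _ _ (\int[mu]_(x in setT) ((fine (\int[mu]_(y in setT) b y))%:E * a x))).
  apply: le_int => x; first by apply: integral_ge0.
  rewrite fineK // muleC.
  apply: (@le_trans _ _ (\int[mu]_(y in setT) ((fine (a x))%:E * b y))).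
    by apply: le_int => y //; rewrite fineK.
  by rewrite -{2}(fineK (af x)); apply: intZ_le => //; apply: fine_ge0.
by rewrite muleC -{2}(fineK bf); apply: intZ_le => //; apply: fine_ge0.
Qed.

Lemma upd_pair_f (K : eqType) (w : K * bool -> R) (k : K) (x y : R) :
  (fun p => upd (upd w (k, true) y) (k, false) x (p, false)) = upd (fun p => w (p, false)) k x.
Proof.
by apply: funext => p; rewrite /upd !xpair_eqE andbT andbF; case: (p == k).
Qed.

Lemma upd_pair_t (K : eqType) (w : K * bool -> R) (k : K) (x y : R) :
  (fun p => upd (upd w (k, true) y) (k, false) x (p, true)) = upd (fun p => w (p, true)) k y.
Proof.
by apply: funext => p; rewrite /upd !xpair_eqE andbT andbF; case: (p == k).
Qed.

Lemma iter_pair (K : eqType) (s : seq K) (g h : (K -> R) -> \bar R) (cg ch : R) :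
  uniq s -> (0 <= cg)%R -> (0 <= ch)%R ->
  (forall v, 0 <= g v) -> (forall v, 0 <= h v) ->
  (forall v, g v <= (cg * \prod_(j <- s) psi (v j))%:E) ->
  (forall v, h v <= (ch * \prod_(j <- s) psi (v j))%:E) ->
  iter_int [seq (p, b) | p <- s, b <- [:: false; true]]
    (fun w => g (fun p => w (p, false)) * h (fun p => w (p, true)))
  <= iter_int s g * iter_int s h.
Proof.
elim: s g h cg ch => [|k s IH] g h cg ch /=; first by [].
move=> /andP[ks us] cg0 ch0 g0 h0 Hg Hh.
apply: int2_le.
- move=> x y; apply: iter_ge0 => v; rewrite mule_ge0 //.
- by move=> x; apply: iter_ge0 => v; apply: g0.
- by move=> x; apply: iter_ge0 => v; apply: h0.
- move=> x; rewrite ge0_fin_numE; last by apply: iter_ge0 => v; apply: g0.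
  apply: (le_lt_trans (iter_dom (c := (cg * psi x)%R) _ _ _ _)) => //.
  + by rewrite mulr_ge0 ?psi_ge0.
  + exact: dom_upd.
  + exact: ltry.
- rewrite ge0_fin_numE; last by apply: integral_ge0 => y _; apply: iter_ge0.
  apply: (@le_lt_trans _ _ (\int[mu]_(y in setT) (ch%:E * (psi y)%:E))).
    apply: le_int => y; first by apply: iter_ge0.
    rewrite -EFinM; apply: iter_dom => //; first by rewrite mulr_ge0 ?psi_ge0.
    exact: dom_upd.
  apply: (le_lt_trans (intZ_le _ _)) => //; first by move=> y; rewrite lee_fin psi_ge0.
  by rewrite int_psi mule1 ltry.
- move=> x y.
  set F := (fun v : K * bool -> R => _).
  have -> : F = (fun v => g (upd (fun p => v (p, false)) k x) * h (upd (fun p => v (p, true)) k y)).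
    apply: funext => v; rewrite /F; congr (g _ * h _); apply: funext => p; rewrite /upd /=;
    by rewrite !xpair_eqE /= ?andbT ?andbF; case: (p == k).
  have := IH (fun v => g (upd v k x)) (fun v => h (upd v k y)) (cg * psi x)%R (ch * psi y)%R us
    (mulr_ge0 cg0 (psi_ge0 x)) (mulr_ge0 ch0 (psi_ge0 y)) (fun v => g0 _) (fun v => h0 _)
    (dom_upd x ks Hg) (dom_upd y ks Hh).
  by [].
Qed.

End IterLemmas.
Section Comb.
Variable R : realType.

Lemma upper_sum m (f : 'I_m -> 'I_m -> R) : (forall i j, f i j = f j i) ->
  \sum_(p <- upper_pairs m) (if p.1 == p.2 then 1 else 2) * f p.1 p.2 = \sum_i \sum_j f i j.
Proof.
move=> fs.
rewrite /upper_pairs big_filter big_mkcond big_allpairs /=.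
pose g (i j : 'I_m) := if (i < j)%N then f i j else if i == j then f i j / 2 else 0.
have E1 : forall i j, f i j = g i j + g j i.
  move=> i j; rewrite /g; case: (ltngtP i j) => [ij|ji|ij].
  - by rewrite -[j == i]val_eqE /= (gtn_eqF ij) addr0.
  - by rewrite -[i == j]val_eqE /= (gtn_eqF ji) add0r fs.
  - have -> : i = j by apply: val_inj.
    by rewrite eqxx -splitr.
have E2 : forall i j : 'I_m, (if (i <= j)%N then (if i == j then 1 else 2) * f i j else 0) = g i j + g i j.
  move=> i j; rewrite /g; case: (ltngtP i j) => [ij|ji|ij].
  - by rewrite -[i == j]val_eqE /= (ltn_eqF ij) mulr_natl mulr2n.
  - by rewrite -[i == j]val_eqE /= (gtn_eqF ji) addr0.
  - have -> : i = j by apply: val_inj.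
    by rewrite ?leqnn eqxx mul1r -splitr.
rewrite big_enum /=.
under eq_bigr do rewrite big_enum /=.
transitivity (\sum_i \sum_j (g i j + g i j)).
  apply: eq_big => // i _; apply: eq_big => // j _; exact: E2.
under [RHS]eq_bigr do under eq_bigr do rewrite E1.
under [RHS]eq_bigr do rewrite big_split /=.
rewrite [RHS]big_split /= [X in _ = _ + X]exchange_big /= -big_split /=.
by apply: eq_bigr => i _; rewrite -big_split.
Qed.
End Comb.
Section Spec.
Variable R : realType.

Lemma col_le_spec m (A : 'M[R]_m) (j : 'I_m) :
  Num.sqrt (\sum_i (A i j) ^+ 2) <= spec_norm A.
Proof.
have elem : exists x : 'cV[R]_m, \sum_i (x i 0) ^+ 2 = 1 /\
    Num.sqrt (\sum_i (A i j) ^+ 2) = Num.sqrt (\sum_i ((A *m x) i 0) ^+ 2).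
  exists (delta_mx j 0); split.
    rewrite (bigD1 j) //= mxE eqxx /= expr1n big1 ?addr0 // => i ij.
    by rewrite mxE (negbTE ij) /= expr0n.
  by congr Num.sqrt; apply: eq_bigr => i _; rewrite -colE mxE.
apply: sup_upper_bound; last exact: elem.
split; first by exists (Num.sqrt (\sum_i (A i j) ^+ 2)).
exists (1 + \sum_i (\sum_k `|A i k|) ^+ 2) => r [x [x1 ->]].
have xk : forall k, `|x k 0| <= 1.
  move=> k; have : x k 0 ^+ 2 <= 1.
    rewrite -x1 (bigD1 k) //= lerDl; apply: sumr_ge0 => *; exact: sqr_ge0.
  by rewrite -real_normK ?num_real // expr_le1.
have Ai : forall i, ((A *m x) i 0) ^+ 2 <= (\sum_k `|A i k|) ^+ 2.
  move=> i; rewrite -real_normK ?num_real // !expr2.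
  have H : `|(A *m x) i 0| <= \sum_k `|A i k|.
    rewrite mxE (le_trans (ler_norm_sum _ _ _)) //; apply: ler_sum => k _.
    by rewrite normrM ler_piMr.
  by apply: ler_pM.
set Y := \sum_i _.
have Y0 : 0 <= \sum_i (\sum_k `|A i k|) ^+ 2 by apply: sumr_ge0 => *; exact: sqr_ge0.
apply: (@le_trans _ _ (Num.sqrt (\sum_i (\sum_k `|A i k|) ^+ 2))).
  by rewrite ler_sqrt //; apply: ler_sum => i _; apply: Ai.
have s0 := sqrtr_ge0 (\sum_i (\sum_k `|A i k|) ^+ 2).
have := sqr_sqrtr Y0; nra.
Qed.

Lemma frob_le m (v : 'I_m * 'I_m -> R) (delta : R) :
  spec_norm (symmx v) <= delta ->
  \sum_(p <- upper_pairs m) (if p.1 == p.2 then 1 else 2) * (v p) ^+ 2 <= m%:R * delta ^+ 2.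
Proof.
move=> Hd.
have -> : \sum_(p <- upper_pairs m) (if p.1 == p.2 then 1 else 2) * (v p) ^+ 2 =
   \sum_(p <- upper_pairs m) (if p.1 == p.2 then 1 else 2) * (symmx v p.1 p.2) ^+ 2.
  rewrite /upper_pairs !big_filter; apply: eq_bigr => -[i j] /= ij.
  by rewrite mxE ij.
rewrite (@upper_sum _ _ (fun i j => (symmx v i j) ^+ 2)); last first.
  move=> i j; rewrite !mxE; case: (ltngtP i j) => // ij.
  by have -> : i = j by apply: val_inj.
rewrite exchange_big /=.
have -> : m%:R * delta ^+ 2 = \sum_(j < m) delta ^+ 2 by rewrite sumr_const card_ord mulr_natl.
apply: ler_sum => j _.
have H := le_trans (col_le_spec (symmx v) j) Hd.
have S0 : 0 <= \sum_i (symmx v i j) ^+ 2 by apply: sumr_ge0 => *; exact: sqr_ge0.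
rewrite -(sqr_sqrtr S0) !expr2; apply: ler_pM => //; exact: sqrtr_ge0.
Qed.

End Spec.
Section Entry.
Variable R : realType.

Lemma expo_le (s2 rho x y : R) : 0 < s2 -> 0 < 1 - rho ^+ 2 ->
  - (x ^+ 2 - 2 * rho * x * y + y ^+ 2) / (2 * s2 * (1 - rho ^+ 2)) <=
  - (x ^+ 2) / (2 * s2) + - (y ^+ 2) / (2 * s2) + `|rho| * (x ^+ 2 + y ^+ 2) / (2 * s2).
Proof.
move=> s0 q0.
set a := `|rho|.
have a0 : 0 <= a by apply: normr_ge0.
have ha : rho ^+ 2 = a ^+ 2 by rewrite /a real_normK ?num_real.
have h1 : 2 * rho * x * y <= a * (x ^+ 2 + y ^+ 2).
  rewrite /a; case: (lerP 0 rho) => r0.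
    rewrite ger0_norm //; have : 0 <= rho * (x - y) ^+ 2 by apply: mulr_ge0 => //; apply: sqr_ge0.
    nra.
  rewrite ltr0_norm //; have : 0 <= - rho * (x + y) ^+ 2.
    by apply: mulr_ge0; [rewrite oppr_ge0 ltW | apply: sqr_ge0].
  nra.
have a1 : a <= 1.
  have : a ^+ 2 <= 1 by rewrite -ha; lra.
  by rewrite expr_le1.
have P0 : 0 <= x ^+ 2 + y ^+ 2 by apply: addr_ge0; apply: sqr_ge0.
have h2 : 0 <= (1 - a) * (x ^+ 2 + y ^+ 2) * a ^+ 2.
  by apply: mulr_ge0; [apply: mulr_ge0 => //; lra | apply: sqr_ge0].
have key : 0 <= (x ^+ 2 - 2 * rho * x * y + y ^+ 2) - (1 - a) * (x ^+ 2 + y ^+ 2) * (1 - rho ^+ 2).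
  rewrite ha; nra.
set Q := x ^+ 2 - 2 * rho * x * y + y ^+ 2.
set q := 1 - rho ^+ 2.
have -> : - (x ^+ 2) / (2 * s2) + - (y ^+ 2) / (2 * s2) + a * (x ^+ 2 + y ^+ 2) / (2 * s2) =
   - Q / (2 * s2 * q) + (Q - (1 - a) * (x ^+ 2 + y ^+ 2) * q) / (2 * s2 * q).
  rewrite /Q /q; field.
  by apply/andP; split; apply: lt0r_neq0 => //; rewrite mulr_gt0.
rewrite lerDl; apply: divr_ge0 => //; apply: ltW; rewrite mulr_gt0 // mulr_gt0 //.
Qed.

End Entry.
Section Entry2.
Variable R : realType.

Lemma bigauss_le (s2 rho x y : R) : 0 < s2 -> 0 < 1 - rho ^+ 2 ->
  bigauss_dens s2 rho x y <= gauss_dens s2 x * gauss_dens s2 y *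
    (Num.sqrt (1 - rho ^+ 2))^-1 * expR (`|rho| * (x ^+ 2 + y ^+ 2) / (2 * s2)).
Proof.
move=> s0 q0; rewrite /bigauss_dens /gauss_dens.
have a0 : 0 < 2 * pi * s2 by rewrite mulr_gt0 // mulr_gt0 // pi_gt0.
have sa0 : 0 < Num.sqrt (2 * pi * s2) by rewrite sqrtr_gt0.
have sq0 : 0 < Num.sqrt (1 - rho ^+ 2) by rewrite sqrtr_gt0.
have -> : 2 * pi * s2 * Num.sqrt (1 - rho ^+ 2) =
    Num.sqrt (2 * pi * s2) ^+ 2 * Num.sqrt (1 - rho ^+ 2) by rewrite sqr_sqrtr // ltW.
set sa := Num.sqrt (2 * pi * s2).
set sq := Num.sqrt (1 - rho ^+ 2).
have -> : expR (- (x ^+ 2) / (2 * s2)) / sa * (expR (- (y ^+ 2) / (2 * s2)) / sa) * sq^-1 *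
   expR (`|rho| * (x ^+ 2 + y ^+ 2) / (2 * s2)) =
   expR (- (x ^+ 2) / (2 * s2) + - (y ^+ 2) / (2 * s2) + `|rho| * (x ^+ 2 + y ^+ 2) / (2 * s2))
   / (sa ^+ 2 * sq).
  rewrite !expRD; field.
  by apply/andP; split; apply: lt0r_neq0.
apply: ler_wpM2r; first by rewrite invr_ge0 ltW // mulr_gt0 // exprn_gt0.
by rewrite ler_expR; apply: expo_le.
Qed.

End Entry2.
Section Count.
Variable R : realType.

Lemma size_upper m : 2 * (size (upper_pairs m))%:R = (m * (m + 1))%:R :> R.
Proof.
have E1 := @upper_sum R m (fun _ _ => 1) (fun _ _ => erefl).
have hs : forall i j : 'I_m, (if i == j then 1 else 0 : R) = (if j == i then 1 else 0).
  by move=> i j; rewrite eq_sym.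
have E2 := @upper_sum R m (fun i j => if i == j then 1 else 0) hs.
have N : (size (upper_pairs m))%:R = \sum_(p <- upper_pairs m) (1 : R).
  by rewrite -sum1_size natr_sum.
rewrite N mulr_sumr.
have -> : \sum_(p <- upper_pairs m) (2 * 1 : R) =
   \sum_(p <- upper_pairs m) ((if p.1 == p.2 then 1 else 2) * 1 +
      (if p.1 == p.2 then 1 else 2) * (if p.1 == p.2 then 1 else 0) : R).
  by apply: eq_bigr => p _; case: (p.1 == p.2) => /=; rewrite ?mulr1 ?mulr0 ?addr0 // -[2 in LHS]/(1 + 1).
rewrite big_split /= E1 E2.
under [X in _ + X = _]eq_bigr => i _.
  rewrite -big_mkcond /= (big_pred1 i); last by move=> j; rewrite eq_sym.
  over.
rewrite /= !sumr_const !card_ord -mulrnA -mulrnDr.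
by rewrite mulnDr muln1.
Qed.

Lemma gauss_le_psi (s2 x : R) : 1 <= s2 -> s2 <= 4 -> gauss_dens s2 x <= 2 * psi x.
Proof.
move=> s1 s4.
rewrite /gauss_dens /psi normal_pdfE ?pnatr_eq0 // /normal_peak /normal_fun subr0.
have h2pi : 0 < 2 * pi :> R by rewrite mulr_gt0 // pi_gt0.
have -> : (2 : R) ^+ 2 * pi *+ 2 = 2 ^+ 2 * (2 * pi) by rewrite -mulr_natr; ring.
rewrite [Num.sqrt (2 ^+ 2 * _)]sqrtrM ?sqr_ge0 // sqrtr_sqr ger0_norm //.
have sp : 0 < Num.sqrt (2 * pi) :> R by rewrite sqrtr_gt0.
rewrite mulrA (_ : 2 * (2 * Num.sqrt (2 * pi))^-1 = (Num.sqrt (2 * pi))^-1); last first.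
  by field; apply: lt0r_neq0.
rewrite [leRHS]mulrC; apply: ler_pM.
- exact: expR_ge0.
- by rewrite invr_ge0 sqrtr_ge0.
- rewrite ler_expR !mulNr lerN2; apply: ler_pM => //; first exact: sqr_ge0.
  have s0 : 0 < s2 by apply: lt_le_trans ltr01 s1.
  rewrite lef_pV2 ?posrE ?mulr_gt0 ?pi_gt0 //.
  by rewrite expr2 -mulr_natr; lra.
- have s0 : 0 < s2 by apply: lt_le_trans ltr01 s1.
  rewrite lef_pV2 ?posrE ?sqrtr_gt0 ?mulr_gt0 ?pi_gt0 //.
  rewrite ler_sqrt; last by rewrite ltW // mulr_gt0.
  by rewrite -[X in X <= _]mulr1 ler_wpM2l // ltW.
Qed.

End Count.
Section Final.
Variable R : realType.

Lemma prod_const_seq (T : Type) (s : seq T) (c : R) : \prod_(p <- s) c = c ^+ size s.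
Proof. by elim: s => [|a s IH]; rewrite ?big_nil ?big_cons ?IH ?exprS. Qed.

Lemma prod4 (T : Type) (s : seq T) (a b f : T -> R) (c : R) :
  \prod_(p <- s) (a p * b p * c * expR (f p)) =
  \prod_(p <- s) a p * \prod_(p <- s) b p * (c ^+ size s * expR (\sum_(p <- s) f p)).
Proof.
elim: s => [|x s IH]; first by rewrite !big_nil expr0 expR0 !mulr1.
rewrite !big_cons IH expRD /= exprS; ring.
Qed.

Lemma uniq_upper m : uniq (upper_pairs m).
Proof.
rewrite /upper_pairs filter_uniq // allpairs_uniq ?enum_uniq //.
by move=> [a b] [c d] _ _ /= [-> ->].
Qed.

Lemma goe_var_bd m (p : 'I_m * 'I_m) : 1 <= goe_var R p <= 4.
Proof. by rewrite /goe_var; case: (p.1 == p.2); apply/andP; split; lra. Qed.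

Lemma gauss_ge0 (s2 x : R) : 0 <= gauss_dens s2 x.
Proof. by rewrite /gauss_dens divr_ge0 ?expR_ge0 ?sqrtr_ge0. Qed.

Lemma bigauss_ge0 (s2 rho x y : R) : 0 <= s2 -> 0 <= bigauss_dens s2 rho x y.
Proof.
move=> s0; rewrite /bigauss_dens divr_ge0 ?expR_ge0 // mulr_ge0 ?sqrtr_ge0 //.
by rewrite mulr_ge0 // mulr_ge0 // pi_ge0.
Qed.

Lemma main_real (K : R) (Pp P : \bar R) : 0 <= K -> (0 <= Pp)%E -> (0 <= P)%E ->
  (Pp <= K%:E * P * P)%E -> fine Pp / fine P ^+ 2 <= K.
Proof.
move=> K0 Pp0 P0 H.
case: P P0 H => [p| |] //= P0 H; last by rewrite expr0n /= invr0 mulr0.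
have [->|pn0] := eqVneq p 0; first by rewrite expr0n /= invr0 mulr0.
have pp : 0 < p by rewrite lt_neqAle eq_sym pn0 -lee_fin.
case: Pp Pp0 H => [r| |] //= Pp0 H.
rewrite -!EFinM lee_fin in H.
rewrite ler_pdivrMr ?exprn_gt0 // expr2 mulrA //.
Qed.

Lemma coef_eq (q : R) (m : nat) : 0 < q ->
  (Num.sqrt q)^-1 ^+ size (upper_pairs m) = powR q (- ((m * (m + 1))%:R / 4)).
Proof.
move=> q0.
have E : (m * (m + 1))%:R / 4 = 2^-1 * (size (upper_pairs m))%:R :> R.
  by rewrite -size_upper; field.
rewrite E powRN powRrM powR12_sqrt ?ltW // powR_mulrn ?sqrtr_ge0 // exprVn.
reflexivity.
Qed.

Lemma expo_sum (rho delta : R) m (X Y : 'I_m * 'I_m -> R) :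
  spec_norm (symmx X) <= delta -> spec_norm (symmx Y) <= delta ->
  \sum_(p <- upper_pairs m) (`|rho| * (X p ^+ 2 + Y p ^+ 2) / (2 * goe_var R p))
  <= `|rho| * m%:R * delta ^+ 2.
Proof.
move=> hX hY.
have fX := frob_le hX; have fY := frob_le hY.
have -> : \sum_(p <- upper_pairs m) (`|rho| * (X p ^+ 2 + Y p ^+ 2) / (2 * goe_var R p)) =
  `|rho| / 4 * (\sum_(p <- upper_pairs m) (if p.1 == p.2 then 1 else 2) * X p ^+ 2 +
                \sum_(p <- upper_pairs m) (if p.1 == p.2 then 1 else 2) * Y p ^+ 2).
  rewrite -big_split mulr_sumr; apply: eq_bigr => p _ /=.
  by rewrite /goe_var; case: (p.1 == p.2); field.
have r0 : 0 <= `|rho| by [].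
have M0 : 0 <= m%:R * delta ^+ 2 by rewrite mulr_ge0 ?sqr_ge0.
set SX := \sum_(p <- _) _ in fX *; set SY := \sum_(p <- _) _ in fY *.
have : 0 <= `|rho| * (2 * (m%:R * delta ^+ 2) - SX - SY).
  by apply: mulr_ge0 => //; lra.
nra.
Qed.

End Final.
Unset Implicit Arguments.

Theorem lemma4p2 (R : realType) (n m k : nat) (delta : R) :
  (2 <= n)%N -> (1 <= m)%N -> 0 < delta -> (0 < k)%N -> (k < n)%N ->
  Rk n m k delta <=
    powR (1 - rho_k R n k ^+ 2) (- ((m * (m + 1))%:R / 4))
    * expR (`|rho_k R n k| * m%:R * delta ^+ 2).
Proof.
move=> n2 m1 d0 k0 kn.
set rho := rho_k R n k.
have hq : 0 < 1 - rho ^+ 2.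
  have np : 0 < n%:R :> R by rewrite ltr0n (ltn_trans k0 kn).
  have t0 : 0 < k%:R / n%:R :> R by rewrite divr_gt0 // ltr0n.
  have t1 : k%:R / n%:R < 1 :> R by rewrite ltr_pdivrMr // mul1r ltr_nat.
  have -> : rho = 1 - 2 * (k%:R / n%:R) by rewrite /rho /rho_k mulrA.
  nra.
set K := powR (1 - rho ^+ 2) (- ((m * (m + 1))%:R / 4)) * expR (`|rho| * m%:R * delta ^+ 2).
have K0 : 0 <= K by rewrite mulr_ge0 ?powR_ge0 ?expR_ge0.
set s := upper_pairs m.
pose Gr (v : 'I_m * 'I_m -> R) := (if spec_norm (symmx v) <= delta then 1 else 0)
   * \prod_(p <- s) gauss_dens (goe_var R p) (v p).
have Gr0 v : 0 <= Gr v.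
  rewrite /Gr mulr_ge0 //; first by case: ifP.
  by apply: prodr_ge0 => p _; apply: gauss_ge0.
pose c2 := \prod_(p <- s) (2 : R).
have c20 : 0 <= c2 by apply: prodr_ge0.
have Gdom v : Gr v <= c2 * \prod_(j <- s) psi (v j).
  rewrite /c2 -big_split /= /Gr.
  apply: (@le_trans _ _ (\prod_(p <- s) gauss_dens (goe_var R p) (v p))).
    rewrite -[leRHS]mul1r ler_wpM2r //; first by apply: prodr_ge0 => p _; apply: gauss_ge0.
    by case: ifP.
  apply: ler_prod => p _; rewrite gauss_ge0 /=.
  by have /andP[h1 h2] := goe_var_bd R p; apply: gauss_le_psi.
have us : uniq s by apply: uniq_upper.
have PW : forall w : 'I_m * 'I_m * bool -> R,
    (((if (spec_norm (symmx (fun p => w (p, false))) <= delta)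
            && (spec_norm (symmx (fun p => w (p, true))) <= delta)
         then 1 else 0)
        * \prod_(p <- s)
            bigauss_dens (goe_var R p) rho (w (p, false)) (w (p, true)))%:E
     <= (K%:E * (Gr (fun p => w (p, false)))%:E) * (Gr (fun p => w (p, true)))%:E)%E.
  move=> w; rewrite -!EFinM lee_fin.
  set X := (fun p => w (p, false)); set Y := (fun p => w (p, true)).
  rewrite /Gr; case hX: (spec_norm (symmx X) <= delta); case hY: (spec_norm (symmx Y) <= delta) => /=;
    rewrite ?(mul0r, mulr0, mul1r) //.
  apply: (@le_trans _ _ (\prod_(p <- s) (gauss_dens (goe_var R p) (X p) * gauss_dens (goe_var R p) (Y p) *
     (Num.sqrt (1 - rho ^+ 2))^-1 * expR (`|rho| * (X p ^+ 2 + Y p ^+ 2) / (2 * goe_var R p))))).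
    apply: ler_prod => p _.
    have /andP[h1 h2] := goe_var_bd R p.
    rewrite bigauss_ge0 /=; last lra.
    by apply: bigauss_le => //; lra.
  rewrite prod4 /s coef_eq // -/s.
  set A := \prod_(p <- s) gauss_dens _ (X p); set B := \prod_(p <- s) gauss_dens _ (Y p).
  have -> : K * A * B = A * B * K by ring.
  apply: ler_wpM2l.
    by rewrite mulr_ge0 //; apply: prodr_ge0 => p _; apply: gauss_ge0.
  rewrite /K; apply: ler_wpM2l; first exact: powR_ge0.
  rewrite ler_expR; exact: (expo_sum rho hX hY).
apply: main_real => //.
- by apply: iter_ge0 => w; rewrite lee_fin mulr_ge0 //; [case: ifP | apply: prodr_ge0 => p _; apply: bigauss_ge0; have /andP[h1 h2] := goe_var_bd R p; lra].
- by apply: iter_ge0 => v; rewrite lee_fin; exact: (Gr0 v).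
rewrite /goe_pair_prob /goe_prob -/s.
rewrite -/rho.
eapply le_trans; first (eapply (iter_le _ _ PW)).
refine (le_trans (iter_pair (g := fun v : 'I_m * 'I_m -> R => (K%:E * (Gr v)%:E)%E) (h := fun v : 'I_m * 'I_m -> R => (Gr v)%:E) (cg := K * c2) (ch := c2) us _ _ _ _ _ _) _).
- by rewrite mulr_ge0.
- exact: c20.
- by move=> v; rewrite -EFinM lee_fin mulr_ge0 // (Gr0 v).
- by move=> v; rewrite lee_fin; exact: (Gr0 v).
- by move=> v; rewrite -EFinM lee_fin -mulrA ler_wpM2l // Gdom.
- by move=> v; rewrite lee_fin; exact: Gdom.
apply: lee_wpmul2r; first by apply: iter_ge0 => v; rewrite lee_fin; exact: (Gr0 v).
exact: iter_Z.
Unshelve.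
by move=> w; rewrite lee_fin mulr_ge0 //; [case: ifP | apply: prodr_ge0 => p _; apply: bigauss_ge0; have /andP[h1 h2] := goe_var_bd R p; lra].
Qed.
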